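(* Let $G$, $H\sqsubseteq G$, the local supervisors $I=\{1,\dots,n\}$ with observable sets $\Sigma_{o,i}$, controllable sets $\Sigma_{c,i}$ and delay bounds $N_{o,i}\in\mathbb{N}$ be as described in the context, and let $\sigma\in\Sigma_c$. Then $\mathcal{L}(H)$ is delay coobservable w.r.t. $N_{o,1},\ldots,N_{o,n}$, $\sigma$, and $\mathcal{L}(G)$ if and only if the following holds: for every $s\in\mathcal{L}(H)$ with $s\sigma\in\mathcal{L}(G)\setminus\mathcal{L}(H)$, and for every tuple $(s_i)_{i\in I^c(\sigma)}\in\mathcal{T}^{\sigma}_{conf}(s)$, there exists $i\in I^c(\sigma)$ such that $s_i\sigma\notin\mathcal{L}(H^{aug}_{N_{o,i}})$.
   Context: $G=(Q,\Sigma,\delta,\Gamma,q_0,Q_m)$ is a deterministic finite automaton with finite state set $Q$, finite event set $\Sigma$, partial transition function $\delta$ (extended to strings as usual), active event sets $\Gamma(q)=\{e\in\Sigma:\delta(q,e)\text{ defined}\}$, initial state $q_0$; $\mathcal{L}(G)$ is its generated language. $H=(Q_H,\Sigma,\delta_H,\Gamma_H,q_0,Q_{m,H})$ is a sub-automaton of $G$ (obtained from $G$ by deleting some states and all transitions attached to them); $\mathcal{L}(H)$ is the specification language. For a string $s$, $|s|$ is its length, $s_{-m}$ is the prefix of $s$ of length $\max\{0,|s|-m\}$, and $\Sigma^{\le M}$ is the set of strings of length at most $M$. There are $n$ local supervisors indexed by $I=\{1,\dots,n\}$; supervisor $i$ has observable events $\Sigma_{o,i}\subseteq\Sigma$, unobservable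 events $\Sigma_{uo,i}=\Sigma\setminus\Sigma_{o,i}$, controllable events $\Sigma_{c,i}\subseteq\Sigma$, and an observation delay bound $N_{o,i}\in\mathbb{N}$; $\Sigma_c=\bigcup_i\Sigma_{c,i}$, and for $\sigma\in\Sigma_c$, $I^c(\sigma)=\{i\in I:\sigma\in\Sigma_{c,i}\}$. $P_i$ is the natural projection onto $\Sigma_{o,i}^*$ (erasing events not in $\Sigma_{o,i}$). For $s\in\mathcal{L}(G)$, $\Theta_i^{N_{o,i}}(s)=\{P_i(s_{-m}):m\in[0,N_{o,i}]\}$; for $t\in\Sigma_{o,i}^*$, $(\Theta_i^{N_{o,i}})^{-1}(t)=\{u\in\mathcal{L}(G):t\in\Theta_i^{N_{o,i}}(u)\}$, both extended to sets elementwise. $\mathcal{L}(H)$ is delay coobservable w.r.t. $N_{o,1},\dots,N_{o,n}$, $\sigma\in\Sigma_c$, and $\mathcal{L}(G)$ if for every $s\in\mathcal{L}(H)$: $s\sigma\in\mathcal{L}(G)\setminus\mathcal{L}(H)$ implies that there exists $i\in I^c(\sigma)$ with $(\Theta_i^{N_{o,i}})^{-1}(\Theta_i^{N_{o,i}}(s))\sigma\cap\mathcal{L}(H)=\emptyset$. The augmented automaton $H^{aug}_{N}$ (for $N\in\mathbb{N}$) has states $Q_H\cup\{q_{dis}\}$, initial state $q_0$, and transitions: for $q\in Q_H$, $e\in\Sigma$, $\delta^{aug}(q,e)=\delta_H(q,e)$ if $e\in\Gamma_H(q)$; $\delta^{aug}(q,e)=q_{dis}$ if $e\notin\Gamma_H(q)$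 and there is $s'\in\Sigma^{\le N}$ with $\delta_H(q,s')$ defined and $e\in\Gamma_H(\delta_H(q,s'))$; undefined otherwise (no transitions leave $q_{dis}$). For $s\in\mathcal{L}(H)$ and $\sigma\in\Sigma_c$, $\mathcal{T}^{\sigma}_{conf}(s)$ is the set of tuples $(s_i)_{i\in I^c(\sigma)}$ of strings with $P_i(s_i)\in\Theta_i^{N_{o,i}}(s)$ for all $i\in I^c(\sigma)$. *)

(* Defs.v *)
From mathcomp Require Import all_boot.
Set Implicit Arguments. Unset Strict Implicit. Unset Printing Implicit Defensive.

Section Automata.
Variables (Q Sigma : finType).

Fixpoint deltas (d : Q -> Sigma -> option Q) (q : Q) (s : seq Sigma) : option Q :=
  match s with
  | [::] => Some q
  | e :: s' => match d q e with Some q' => deltas d q' s' | None => None end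
  end.

Definition lang (d : Q -> Sigma -> option Q) (q0 : Q) (s : seq Sigma) : Prop :=
  deltas d q0 s <> None.

(* Transition function of the sub-automaton H of G with state set QH
   (states outside QH and all transitions attached to them deleted). *)
Definition deltaH (d : Q -> Sigma -> option Q) (QH : {set Q}) (q : Q) (e : Sigma)
  : option Q :=
  if q \in QH then
    match d q e with
    | Some q' => if q' \in QH then Some q' else None
    | None => None
    end
  else None.

Definition proj (So : {set Sigma}) (s : seq Sigma) : seq Sigma :=
  [seq e <- s | e \in So].

Definition trunc (m : nat) (s : seq Sigma) : seq Sigma := take (size s - m) s.

Definition Theta (So : {set Sigma}) (N : nat) (s t : seq Sigma) : Prop :=
  exists m, m <= N /\ t = proj So (trunc m s).

Definition delay_coobservable (d : Q -> Sigma -> option Q) (q0 : Q) (QH : {set Q})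
  (n : nat) (So Sc : 'I_n -> {set Sigma}) (No : 'I_n -> nat) (sigma : Sigma) : Prop :=
  forall s : seq Sigma,
    lang (deltaH d QH) q0 s ->
    lang d q0 (rcons s sigma) -> ~ lang (deltaH d QH) q0 (rcons s sigma) ->
    exists i : 'I_n, sigma \in Sc i /\
      (* (Theta^{-1}(Theta(s))) sigma  \cap L(H) = empty *)
      forall u : seq Sigma, lang d q0 u ->
        (exists t, Theta (So i) (No i) u t /\ Theta (So i) (No i) s t) ->
        ~ lang (deltaH d QH) q0 (rcons u sigma).

(* Augmented automaton H^aug_N: states option Q, None = q_dis.
   Transition relation (it is deterministic; given relationally). *)
Definition aug_trans (d : Q -> Sigma -> option Q) (QH : {set Q}) (N : nat)
  (x : option Q) (e : Sigma) (y : option Q) : Prop :=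
  match x with
  | None => False
  | Some q =>
      q \in QH /\
      ((exists q', deltaH d QH q e = Some q' /\ y = Some q') \/
       (deltaH d QH q e = None /\ y = None /\
        exists s' : seq Sigma, size s' <= N /\
          exists q'', deltas (deltaH d QH) q s' = Some q'' /\
                      deltaH d QH q'' e <> None))
  end.

Fixpoint aug_reach (d : Q -> Sigma -> option Q) (QH : {set Q}) (N : nat)
  (x : option Q) (s : seq Sigma) (y : option Q) : Prop :=
  match s with
  | [::] => y = x
  | e :: s' => exists z, aug_trans d QH N x e z /\ aug_reach d QH N z s' y
  end.

Definition lang_aug (d : Q -> Sigma -> option Q) (q0 : Q) (QH : {set Q}) (N : nat)
  (s : seq Sigma) : Prop :=
  exists y, aug_reach d QH N (Some q0) s y.

End Automata.

(* Main.v *)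
From Stdlib Require Import Classical ClassicalEpsilon.
Require Import Defs.
From mathcomp Require Import all_boot zify.

Set Implicit Arguments.
Section Aux.
Context {Q Sigma : finType}.

Lemma deltas_cat (d : Q -> Sigma -> option Q) q s1 s2 :
  deltas d q (s1 ++ s2) =
  match deltas d q s1 with Some q' => deltas d q' s2 | None => None end.
Proof.
elim: s1 q => [|e s1 IH] q //=.
by case: (d q e).
Qed.

Lemma deltas_rcons (d : Q -> Sigma -> option Q) q s e :
  deltas d q (rcons s e) =
  match deltas d q s with Some q' => d q' e | None => None end.
Proof.
rewrite -cats1 deltas_cat; case: (deltas d q s) => //= q'; by case: (d q' e).
Qed.

Lemma deltaH_in (d : Q -> Sigma -> option Q) (QH : {set Q}) q e q' :
  deltaH d QH q e = Some q' -> q' \in QH.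
Proof.
rewrite /deltaH; case: (q \in QH) => //; case: (d q e) => // a.
by case: ifP => // Ha [<-].
Qed.

Lemma deltaH_d (d : Q -> Sigma -> option Q) (QH : {set Q}) q e q' :
  deltaH d QH q e = Some q' -> d q e = Some q'.
Proof.
rewrite /deltaH; case: (q \in QH) => //; case: (d q e) => // a.
by case: ifP => // Ha [<-].
Qed.

Lemma deltasH_in (d : Q -> Sigma -> option Q) (QH : {set Q}) q s q' :
  q \in QH -> deltas (deltaH d QH) q s = Some q' -> q' \in QH.
Proof.
elim: s q => [|e s IH] q /= Hq; first by case=> <-.
case E: (deltaH d QH q e) => [a|] //.
apply: IH; exact: (@deltaH_in d QH q e a E).
Qed.

Lemma deltasH_d (d : Q -> Sigma -> option Q) (QH : {set Q}) q s q' :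
  deltas (deltaH d QH) q s = Some q' -> deltas d q s = Some q'.
Proof.
elim: s q => [|e s IH] q //=.
case E: (deltaH d QH q e) => [a|] //.
by rewrite (@deltaH_d d QH q e a E); apply: IH.
Qed.

Lemma aug_reach_rcons (d : Q -> Sigma -> option Q) (QH : {set Q}) N x u z e y :
  aug_reach d QH N x u z -> aug_trans d QH N z e y ->
  aug_reach d QH N x (rcons u e) y.
Proof.
elim: u x => [|a u IH] x /=.
  by move=> -> Ht; exists y.
by move=> [w [Hw Hr]] Ht; exists w; split => //; apply: IH.
Qed.

Lemma deltas_aug (d : Q -> Sigma -> option Q) (QH : {set Q}) N q u q1 :
  deltas (deltaH d QH) q u = Some q1 -> aug_reach d QH N (Some q) u (Some q1).
Proof.
elim: u q => [|a u IH] q /=; first by case=> ->.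
case E: (deltaH d QH q a) => [q'|] // H.
exists (Some q'); split; last exact: IH.
split; last by left; exists q'.
move: E; rewrite /deltaH; by case: (q \in QH).
Qed.

Lemma aug_deltas (d : Q -> Sigma -> option Q) (QH : {set Q}) N q u e y :
  aug_reach d QH N (Some q) (rcons u e) y ->
  exists q1, deltas (deltaH d QH) q u = Some q1 /\ aug_trans d QH N (Some q1) e y.
Proof.
elim: u q => [|a u IH] q /=.
  by move=> [z [Hz ->]]; exists q.
move=> [z [Hz Hr]].
case: z Hz Hr => [q'|] Hz Hr; last first.
  by case: u {IH} Hr => [|b u] /= [w []].
case: Hz => _ [[q'' [E [Heq]]]|[_ [//]]]; subst q''.
rewrite E; exact: IH.
Qed.

End Aux.
Arguments aug_deltas {Q Sigma d QH N q u e y}.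
Arguments deltas_aug {Q Sigma d QH} N {q u q1}.
Arguments deltasH_in {Q Sigma d QH q s q'}.
Arguments deltasH_d {Q Sigma d QH q s q'}.
Arguments aug_reach_rcons {Q Sigma d QH N x u z e y}.

Theorem theorem1 (Q Sigma : finType) (d : Q -> Sigma -> option Q) (q0 : Q)
  (QH : {set Q}) (hq0 : q0 \in QH)
  (n : nat) (So Sc : 'I_n -> {set Sigma}) (No : 'I_n -> nat)
  (sigma : Sigma) (hsigma : exists i : 'I_n, sigma \in Sc i) :
  delay_coobservable d q0 QH So Sc No sigma <->
  (forall s : seq Sigma,
     lang (deltaH d QH) q0 s ->
     lang d q0 (rcons s sigma) -> ~ lang (deltaH d QH) q0 (rcons s sigma) ->
     forall ss : 'I_n -> seq Sigma,
       (forall i : 'I_n, sigma \in Sc i -> Theta (So i) (No i) s (proj (So i) (ss i))) ->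
       exists i : 'I_n, sigma \in Sc i /\
         ~ lang_aug d q0 QH (No i) (rcons (ss i) sigma)).
Proof.
split.
- move=> Hco s Hs HG HnH ss Hss.
  have [i [Hi Hu]] := Hco s Hs HG HnH.
  exists i; split => // [[y Hy]].
  have [q1 [Hq1 Ht]] := aug_deltas Hy.
  have [s' [Hs' [q'' [Hq'' Hen]]]] : exists s' : seq Sigma, size s' <= No i /\
      exists q'', deltas (deltaH d QH) q1 s' = Some q'' /\
                  deltaH d QH q'' sigma <> None.
    case: Ht => _ [[q' [E _]]|[_ [_ H]]] //.
    by exists [::]; split => //; exists q1; split => //; rewrite E.
  apply: (Hu (ss i ++ s')).
  + have H1 : deltas (deltaH d QH) q0 (ss i ++ s') = Some q''.
      by rewrite deltas_cat Hq1.
    by rewrite /lang (deltasH_d H1).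
  + exists (proj (So i) (ss i)); split; last exact: Hss.
    exists (size s'); split => //.
    by rewrite /trunc size_cat addnK take_size_cat.
  + by rewrite /lang deltas_rcons deltas_cat Hq1 Hq''.
- move=> Hr s Hs HG HnH.
  apply: NNPP => Hno.
  have Hex : forall i : 'I_n, exists v : seq Sigma,
      sigma \in Sc i -> exists u, lang d q0 u /\
        lang (deltaH d QH) q0 (rcons u sigma) /\
        exists m, m <= No i /\ v = trunc m u /\
        Theta (So i) (No i) s (proj (So i) v).
    move=> i.
    case: (boolP (sigma \in Sc i)) => Hi; last by exists [::].
    have : ~ (forall u : seq Sigma, lang d q0 u ->
        (exists t, Theta (So i) (No i) u t /\ Theta (So i) (No i) s t) ->
        ~ lang (deltaH d QH) q0 (rcons u sigma)).
      by move=> H; apply: Hno; exists i.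
    move=> /not_all_ex_not [u Hu].
    apply: NNPP => Hne; apply: Hu => HuG [t [[m [Hm Ht1]] Ht2]] HuH.
    apply: Hne; exists (trunc m u) => _; exists u; split => //; split => //.
    by exists m; split => //; split => //; rewrite -Ht1.
  pose ss := fun i => proj1_sig (constructive_indefinite_description _ (Hex i)).
  have Hssp : forall i, sigma \in Sc i -> exists u, lang d q0 u /\
        lang (deltaH d QH) q0 (rcons u sigma) /\
        exists m, m <= No i /\ ss i = trunc m u /\
        Theta (So i) (No i) s (proj (So i) (ss i)).
    move=> i; rewrite /ss; case: (constructive_indefinite_description _ _) => v Hv /=.
    exact: Hv.
  have [i [Hi Hna]] : exists i, sigma \in Sc i /\
      ~ lang_aug d q0 QH (No i) (rcons (ss i) sigma).
    apply: (Hr s Hs HG HnH ss) => i Hi.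
    by have [u [_ [_ [m [_ [_ H]]]]]] := Hssp i Hi.
  have [u [_ [HuH [m [Hm [Hsi _]]]]]] := Hssp i Hi.
  apply: Hna.
  move: HuH; rewrite /lang deltas_rcons.
  have Hu : u = ss i ++ drop (size u - m) u by rewrite Hsi /trunc cat_take_drop.
  rewrite {1}Hu deltas_cat.
  case Eq1: (deltas (deltaH d QH) q0 (ss i)) => [q1|] //.
  case Eq2: (deltas (deltaH d QH) q1 (drop (size u - m) u)) => [q''|] // Hen.
  have Hq1 : q1 \in QH by apply: deltasH_in Eq1.
  case E: (deltaH d QH q1 sigma) => [q'|].
    exists (Some q'); apply: aug_reach_rcons (deltas_aug (No i) Eq1) _.
    by split => //; left; exists q'.
  exists None; apply: aug_reach_rcons (deltas_aug (No i) Eq1) _.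
  split => //; right; split => //; split => //.
  exists (drop (size u - m) u); split.
    rewrite size_drop; apply: leq_trans Hm; lia.
  by exists q''.
Qed.
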